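(* Let $m\ge3$ be odd and $n\ge2$. Every completely positive tensor $\mathcal{A}\in S_{m,n}$ is a strongly SOS tensor.
   Context: $S_{m,n}$ is the set of real symmetric $m$th order $n$-dimensional tensors. For $\mathbf{u}\in\mathbb{R}^n$, $\mathbf{u}^m$ is the tensor with entries $u_{i_1}\cdots u_{i_m}$. A tensor is completely positive if it equals $\sum_{l=1}^r(\mathbf{u}^{(l)})^m$ for some positive integer $r$ and nonnegative vectors $\mathbf{u}^{(l)}\in\mathbb{R}^n$. For $\mathbf{x}\in\mathbb{R}^n$ let $F_i(\mathbf{x})=\sum_{i_2,\dots,i_m=1}^n a_{ii_2\dots i_m}x_{i_2}\cdots x_{i_m}$. For odd $m$, $\mathcal{A}\in S_{m,n}$ is a strongly SOS tensor if each $F_i$, $i=1,\dots,n$, is a sum of squares of real polynomials. *)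

(* Defs.v *)
From HB Require Import structures.
From mathcomp Require Import all_boot all_order all_algebra.
From mathcomp Require Import mpoly.
Set Implicit Arguments. Unset Strict Implicit. Unset Printing Implicit Defensive.
Import Order.TTheory GRing.Theory Num.Theory.
Local Open Scope ring_scope.

Definition tensor (R : Type) (m n : nat) := m.-tuple 'I_n -> R.

Definition symmetric_tensor (R : Type) (m n : nat) (A : tensor R m n) : Prop :=
  forall t t' : m.-tuple 'I_n, perm_eq t t' -> A t = A t'.

Definition rank_one (R : comNzRingType) (m n : nat) (u : 'I_n -> R) : tensor R m n :=
  fun t => \prod_(j <- t) u j.

Definition completely_positive (R : realDomainType) (m n : nat)
    (A : tensor R m n) : Prop :=
  exists (r : nat) (u : 'I_r -> 'I_n -> R),
    (0 < r)%N /\ (forall l j, 0 <= u l j) /\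
    (forall t, A t = \sum_(l < r) @rank_one R m n (u l) t).

(* F_i(x) = sum_{i_2..i_m} a_{i i_2 ... i_m} x_{i_2} ... x_{i_m}:
   sum over index tuples whose first entry is i (the [head i t] default is
   irrelevant since m >= 1 in use), monomial over the remaining entries. *)
Definition Fpoly (R : comNzRingType) (m n : nat) (A : tensor R m n) (i : 'I_n)
    : {mpoly R[n]} :=
  \sum_(t : m.-tuple 'I_n | head i t == i) A t *: \prod_(j <- behead t) 'X_j.

Definition is_sos (R : comNzRingType) (n : nat) (p : {mpoly R[n]}) : Prop :=
  exists s : seq {mpoly R[n]}, p = \sum_(q <- s) q ^+ 2.

Definition strongly_sos (R : comNzRingType) (m n : nat) (A : tensor R m n) : Prop :=
  forall i : 'I_n, is_sos (Fpoly A i).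

(* Main.v *)
Require Import Defs.
From HB Require Import structures.
From mathcomp Require Import all_boot all_order all_algebra.
From mathcomp Require Import mpoly.
Import Order.TTheory GRing.Theory Num.Theory.
Local Open Scope ring_scope.

Lemma sum_tupleS (V : nmodType) (n k : nat) (F : k.+1.-tuple 'I_n -> V) :
  \sum_(t : k.+1.-tuple 'I_n) F t =
  \sum_(j : 'I_n) \sum_(t : k.-tuple 'I_n) F (cons_tuple j t).
Proof.
rewrite pair_big /=.
rewrite (reindex (fun p : 'I_n * k.-tuple 'I_n => cons_tuple p.1 p.2)) //=.
exists (fun t => (thead t, behead_tuple t)).
- move=> p _; case: p => j t /=.
  congr pair; last by apply/val_eqP.
- move=> t _ /=; apply/val_eqP => /=; case: t => [[|x s] Hs] //=.
Qed.

Lemma sum_tuple_pow (S : comNzRingType) (n k : nat) (c : 'I_n -> S) :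
  \sum_(t : k.-tuple 'I_n) \prod_(j <- t) c j = (\sum_j c j) ^+ k.
Proof.
elim: k => [|k IH].
  rewrite (eq_bigr (fun _ => 1)); last by move=> t _; rewrite tuple0 big_nil.
  by rewrite sumr_const card_tuple expn0 expr0.
rewrite sum_tupleS exprS mulr_suml; apply: eq_bigr => j _.
rewrite -IH mulr_sumr; apply: eq_bigr => t _.
by rewrite big_cons.
Qed.

Theorem theorem4p4 (R : rcfType) (m n : nat) (A : tensor R m n) :
  odd m -> (3 <= m)%N -> (2 <= n)%N ->
  symmetric_tensor A -> completely_positive A -> strongly_sos A.
Proof.
case: m A => [|k] A // modd _ _ _ [r [u [_ [u0 Au]]]] i.
have hk : k = (k./2).*2 by rewrite even_halfK //; move: modd => /=; case: (odd k).
set h := k./2 in hk.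
pose S l : {mpoly R[n]} := \sum_j (u l j)%:MP * 'X_j.
exists [seq (Num.sqrt (u l i))%:MP * S l ^+ h | l <- enum 'I_r].
rewrite big_map big_enum /= /Fpoly big_mkcond sum_tupleS (bigD1 i) //=.
rewrite [X in _ + X]big1 ?addr0; last first.
  by move=> j ji; apply: big1 => t _; rewrite /= (negbTE ji).
rewrite eqxx.
under eq_bigr => t _ do rewrite Au scaler_suml.
rewrite exchange_big /=; apply: eq_bigr => l _.
rewrite exprMn -rmorphXn sqr_sqrtr // -exprM muln2 -hk /S -sum_tuple_pow.
rewrite mulr_sumr; apply: eq_bigr => t _.
rewrite /rank_one big_cons big_split /= -rmorph_prod mulrA -mpolyCM mul_mpolyC.
by [].
Qed.
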